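(* For every positive integer $n$ and complex parameters $a,b$ (with all denominators nonzero), \begin{align*} \sum_{k=0}^n \frac{(q^{-n}, q^n; q)_k\, q^k}{(q/a, q/b; q)_k} ={}&(-1)^n q^{n(n+1)/2} (1-q^n) \frac{(a, b; q)_n}{(q/a, q/b; q)_n}\biggl(\frac{1}{ab}\biggr)^n \Biggl\{\frac{1-ab}{(1-a)(1-b)}+\frac{(1/a, 1/b; q)_n}{(1-q^n)(a, b; q)_n} (-ab)^n q^{-n(n-1)/2}\\ &+(1-ab)\sum_{j=1}^{n-1} \frac{(1+q^j) (1/a, 1/b; q)_j}{ (a, b; q)_{j+1}} (-ab)^j q^{-j(j-1)/2}\Biggr\}. \end{align*}
   Context: Throughout, $q$ is a complex number with $0<|q|<1$. For $x\in\mathbb{C}$ and an integer $n\ge 0$, $(x;q)_n=\prod_{k=0}^{n-1}(1-xq^k)$, and $(x_1,\dots,x_m;q)_n=(x_1;q)_n\cdots(x_m;q)_n$. *)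

(* Defs.v *)
From mathcomp Require Import all_boot all_order all_algebra.
From mathcomp Require Export complex.
Set Implicit Arguments. Unset Strict Implicit. Unset Printing Implicit Defensive.
Import Order.TTheory GRing.Theory Num.Theory.
Local Open Scope ring_scope.

Definition qpoch {F : comRingType} (x q : F) (n : nat) : F :=
  \prod_(k < n) (1 - x * q ^+ k).

(* Main.v *)
Require Import Defs.
From mathcomp Require Import all_boot all_order all_algebra.
From mathcomp Require Import complex.
From mathcomp Require Import ring zify.
Import Order.TTheory GRing.Theory Num.Theory.
Local Open Scope ring_scope.
Local Open Scope complex_scope.


Lemma halfS n : ((n.+1 * n.+2)./2 = (n * n.+1)./2 + n.+1)%N.
Proof.
have -> : (n.+1 * n.+2 = n * n.+1 + (n.+1).*2)%N by rewrite -mul2n; nia.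
by rewrite halfD odd_double andbF add0n doubleK.
Qed.

Section Q.
Variables (F : fieldType) (q a b : F).

Lemma qpochS c k : qpoch c q k.+1 = qpoch c q k * (1 - c * q ^+ k).
Proof. by rewrite /qpoch big_ord_recr. Qed.

Lemma qpochSl c k : qpoch c q k.+1 = (1 - c) * qpoch (c * q) q k.
Proof.
rewrite /qpoch big_ord_recl /= expr0 mulr1; congr (_ * _).
by apply: eq_bigr => i _; rewrite /bump /= exprS mulrA.
Qed.

Lemma qpoch_shift c k : qpoch (c * q) q k * (1 - c) = qpoch c q k * (1 - c * q ^+ k).
Proof. by rewrite mulrC -qpochSl qpochS. Qed.

Lemma qpoch0 c : qpoch c q 0 = 1.
Proof. by rewrite /qpoch big_ord0. Qed.

Lemma qpoch_le c k l : (k <= l)%N -> qpoch c q l != 0 -> qpoch c q k != 0.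
Proof.
elim: l => [|l IH]; first by rewrite leqn0 => /eqP ->.
rewrite leq_eqVlt => /orP [/eqP -> //|]; rewrite ltnS => /IH H.
by rewrite qpochS mulf_eq0 negb_or => /andP [/H].
Qed.

Lemma qpoch_fac c k l : (k < l)%N -> qpoch c q l != 0 -> 1 - c * q ^+ k != 0.
Proof.
move=> kl H; have := @qpoch_le c k.+1 l kl H; by rewrite qpochS mulf_eq0 negb_or => /andP [].
Qed.

Hypothesis q0 : q != 0.

Lemma qpochVn0 m k : (m < k)%N -> qpoch (q ^- m) q k = 0.
Proof.
elim: k => // k IH; rewrite ltnS leq_eqVlt => /orP [/eqP <-|/IH H].
  by rewrite qpochS mulVf ?subrr ?mulr0 // expf_neq0.
by rewrite qpochS H mul0r.
Qed.
End Q.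
Arguments qpoch_le {F q c k l}. Arguments qpoch_fac {F q c k l}.

Section A.
Variable (F : fieldType) (q a b : F).
Definition c0 x : F := -((1-(a*x)^-1)*(1-(b*x)^-1))/((1-(x*x*q)^-1)*(1-(x*x*q*q)^-1)).
Definition beta x : F := -((1-x*q*q/a)*(1-x*q*q/b))/((1-x*x*q*q)*(1-x*x*q*q*q)).
Definition c1 x : F := (-1 - beta x - c0 x + q)*(1-x)/(1-(x*q)^-1).
Definition c2 x : F := beta x*(1-x)*(1-x*q)/((1-(x*q)^-1)*(1-(x*q*q)^-1)).
Definition Kp x : F := (1-x)*(1-x*q)/((1-(x*q)^-1)*(1-(x*q*q)^-1)).
Definition Gf x A B y E E' : F := Kp x*(1-a^-1)*(1-b^-1)*A*B*y/(E*E'*(1-x*y)*(1-x*q*y)).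

Lemma s1 {z:F} : z != 1 -> 1 - z != 0. Proof. by move=> h; rewrite subr_eq0 eq_sym. Qed.
Lemma s2 {z:F} : z != 1 -> z - 1 != 0. Proof. by rewrite subr_eq0. Qed.
Lemma s3 {z:F} : z != 1 -> 1 - z^-1 != 0. Proof. by move=> h; rewrite subr_eq0 eq_sym invr_eq1. Qed.
Lemma s4 {c y : F} : c != 0 -> 1 - c^-1*y != 0 -> c - y != 0.
Proof.
move=> c0' h; have -> : c - y = c*(1-c^-1*y) by rewrite mulrBr mulr1 mulrA mulfV // mul1r.
exact: mulf_neq0.
Qed.

Lemma step_alg x y A1 A2 A3 B1 B2 B3 Da Db Ea Eb :
 q != 0 -> a != 0 -> b != 0 -> x != 0 ->
 x != 1 -> x*q != 1 -> x*q*q != 1 -> x*x*q*q != 1 -> x*x*q*q*q != 1 -> x*x*q != 1 ->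
 a != 1 -> b != 1 -> Ea != 0 -> Eb != 0 -> 1 - a^-1*y != 0 -> 1 - b^-1*y != 0 ->
 x*y != 1 -> x*q*y != 1 -> x*q*q*y != 1 -> x*q*(y*q) != 1 ->
 A2*(1-(x*q*q)^-1) = A3*(1-(x*q*q)^-1*y) ->
 A1*(1-(x*q)^-1) = A2*(1-(x*q)^-1*y) ->
 B2*(1-x) = B1*(1-x*y) -> B3*(1-x*q) = B2*(1-x*q*y) ->
 Da*(1-a^-1) = Ea*(1-a^-1*y) -> Db*(1-b^-1) = Eb*(1-b^-1*y) ->
 c0 x * (A1*B1*y/(Da*Db)) + c1 x*(A2*B2*y/(Da*Db)) + c2 x*(A3*B3*y/(Da*Db)) =
 Gf x (A3*(1-(x*q*q)^-1*y)) (B3*(1-x*q*q*y)) (y*q) (Ea*(1-a^-1*y)) (Eb*(1-b^-1*y)) - Gf x A3 B3 y Ea Eb.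
Proof.
move=> q0 a0 b0 x0 x1 xq1 xqq1 xxqq1 xxqqq1 xxq1 a1 b1 Ea0 Eb0 ay by' xy1 xqy1 xqqy1 xqyq1
  eA2 eA1 eB2 eB3 eDa eDb.
have h1 := s1 x1. have h2 := s1 xq1. have h3 := s3 xq1. have h4 := s3 xqq1.
have h5 := s1 xxqq1. have h6 := s1 xxqqq1. have h7 := s3 xxq1. have h8 := s3 xxqq1.
have h11 := s1 xy1. have h12 := s1 xqy1. have h13 := s1 xqqy1. have h14 := s1 xqyq1.
have ha := s3 a1. have hb := s3 b1.
have g1 := s2 xqq1. have g2 := s2 xq1. have g3 := s2 xxqq1. have g4 := s2 xxq1.
have g5 := s2 a1. have g6 := s2 b1. have g7 := s4 a0 ay. have g8 := s4 b0 by'.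
have -> : A1 = A2*(1-(x*q)^-1*y)/(1-(x*q)^-1) by rewrite -eA1 mulfK.
have -> : A2 = A3*(1-(x*q*q)^-1*y)/(1-(x*q*q)^-1) by rewrite -eA2 mulfK.
have -> : B3 = B2*(1-x*q*y)/(1-x*q) by rewrite -eB3 mulfK.
have -> : B2 = B1*(1-x*y)/(1-x) by rewrite -eB2 mulfK.
have -> : Da = Ea*(1-a^-1*y)/(1-a^-1) by rewrite -eDa mulfK.
have -> : Db = Eb*(1-b^-1*y)/(1-b^-1) by rewrite -eDb mulfK.
rewrite /c1 /c2 /c0 /beta /Gf /Kp.
field.
by rewrite ?q0 ?a0 ?b0 ?x0 ?h1 ?h2 ?h3 ?h4 ?h5 ?h6 ?h7 ?h8 ?h11 ?h12 ?h13 ?h14 ?ha ?hb ?g1 ?g2 ?g3 ?g4 ?g5 ?g6 ?g7 ?g8 ?Ea0 ?Eb0.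
Qed.
End A.
Arguments c0 {F}. Arguments c1 {F}. Arguments c2 {F}. Arguments beta {F}.
Arguments Kp {F}. Arguments Gf {F}.
Arguments s1 {F z}. Arguments s2 {F z}. Arguments s3 {F z}. Arguments s4 {F c y}.

Section R.
Variable (F : fieldType) (q a b : F).
Hypotheses (q0 : q != 0) (a0 : a != 0) (b0 : b != 0) (a1 : a != 1) (b1 : b != 1).
Hypothesis qn1 : forall j, (0 < j)%N -> q ^+ j != 1.

Definition Fm m k := qpoch (q ^- m) q k * qpoch (q ^+ m) q k * q ^+ k
   / (qpoch (q / a) q k * qpoch (q / b) q k).
Definition Sm m := \sum_(k < m.+1) Fm m k.
Definition Gk m k := Gf q a b (q^+m) (qpoch (q^-(m.+2)) q k) (qpoch (q^+(m.+2)) q k) (q^+k)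
   (qpoch a^-1 q k) (qpoch b^-1 q k).
Definition G0 x := (1-a^-1)*(1-b^-1)/((1-(x*q)^-1)*(1-(x*q*q)^-1)).

Lemma Fm0 m k : (m < k)%N -> Fm m k = 0.
Proof. by move=> h; rewrite /Fm qpochVn0 // !mul0r. Qed.

Lemma step m k : (0 < m)%N -> (k <= m.+2)%N -> qpoch a^-1 q m.+3 != 0 -> qpoch b^-1 q m.+3 != 0 ->
  c0 q a b (q^+m) * Fm m k + c1 q a b (q^+m) * Fm m.+1 k + c2 q a b (q^+m) * Fm m.+2 k
  = Gk m k.+1 - Gk m k.
Proof.
move=> m0 km Ea Eb.
rewrite /Fm /Gk !qpochS !exprSr.
set x := q ^+ m; set y := q ^+ k.
have x0 : x != 0 by rewrite expf_neq0.
have pw : forall e, (0 < e)%N -> q ^+ e != 1 := qn1.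
apply: step_alg => //.
- exact: qn1.
- by rewrite -exprSr qn1.
- by rewrite -!exprSr qn1.
- by rewrite -exprD -!exprSr qn1.
- by rewrite -exprD -!exprSr qn1.
- by rewrite -exprD -!exprSr qn1.
- by apply: (qpoch_le _ Ea); rewrite ltnW // ltnS.
- by apply: (qpoch_le _ Eb); rewrite ltnW // ltnS.
- by apply: (qpoch_fac _ Ea); rewrite ltnS.
- by apply: (qpoch_fac _ Eb); rewrite ltnS.
- by rewrite -exprD qn1 // addn_gt0 m0.
- by rewrite -exprSr -exprD qn1 // addn_gt0.
- by rewrite -!exprSr -exprD qn1 // addn_gt0.
- by rewrite -!exprSr -exprD qn1 // addn_gt0.
- by rewrite /y -qpoch_shift [(x*q*q)^-1]invfM mulfVK.
- by rewrite /y -qpoch_shift [(x*q)^-1]invfM mulfVK.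
- by rewrite /y -qpoch_shift.
- by rewrite /y -qpoch_shift.
- by rewrite /y -qpoch_shift [_^-1 * q]mulrC.
- by rewrite /y -qpoch_shift [_^-1 * q]mulrC.
Qed.

Lemma recS m : (0 < m)%N -> qpoch a^-1 q m.+3 != 0 -> qpoch b^-1 q m.+3 != 0 ->
  c0 q a b (q^+m) * Sm m + c1 q a b (q^+m) * Sm m.+1 + c2 q a b (q^+m) * Sm m.+2
  = - G0 (q^+m).
Proof.
move=> m0 Ea Eb.
have e0 : Sm m = \sum_(k < m.+3) Fm m k.
  by rewrite /Sm; symmetry; rewrite big_ord_recr /= big_ord_recr /= Fm0 // Fm0 // !addr0.
have e1 : Sm m.+1 = \sum_(k < m.+3) Fm m.+1 k.
  by rewrite /Sm; symmetry; rewrite big_ord_recr /= Fm0 // !addr0.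
rewrite e0 e1 /Sm !mulr_sumr -!big_split /=.
rewrite (eq_bigr (fun k : 'I_m.+3 => Gk m k.+1 - Gk m k)); last first.
  by move=> i _; apply: step => //; rewrite -ltnS.
rewrite -(big_mkord xpredT (fun k => Gk m k.+1 - Gk m k)) telescope_sumr //.
have -> : Gk m m.+3 = 0 by rewrite /Gk /Gf qpochVn0 // !mulr0 !mul0r.
rewrite /Gk /Gf !qpoch0 expr0 sub0r /G0 /Kp.
have x1 : 1 - q^+m != 0 by apply: s1; apply: qn1.
have x2 : 1 - q^+m * q != 0 by apply: s1; rewrite -exprSr qn1.
have x3 : q^+m * q * q - 1 != 0 by apply: s2; rewrite -!exprSr qn1.
have x4 : q^+m * q - 1 != 0 by apply: s2; rewrite -!exprSr qn1.
have x0 : q^+m != 0 by rewrite expf_neq0.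
field.
by rewrite q0 x0 x3 x4 a0 b0 x1 x2.
Qed.
End R.
Arguments Fm {F}. Arguments Sm {F}. Arguments Gk {F}. Arguments G0 {F}.

Lemma halfP n : (0 < n)%N -> ((n * n.+1)./2 = (n * n.-1)./2 + n)%N.
Proof. by case: n => // p _; rewrite halfS /= mulnC. Qed.

Section B.
Variable (F : fieldType) (q a b : F).
Definition rho x : F := -(x*q)*(1-x*q)/(1-x)*((1-a*x)*(1-b*x))/((1-q/a*x)*(1-q/b*x))/(a*b).
Definition DD x : F := x*(1-a^-1)*(1-b^-1)/((1-a^-1*x)*(1-b^-1*x)).
Definition TT x : F := x*(1+x)*(1-x)*(1-a^-1)*(1-b^-1)/((1-a^-1*x)*(1-b^-1*x)*(1-a*x)*(1-b*x)).
Definition Cc : F := (1 - a * b) / ((1 - a) * (1 - b)).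
Definition G0' x : F := (1-a^-1)*(1-b^-1)/((1-(x*q)^-1)*(1-(x*q*q)^-1)).

Lemma s5 {u v : F} : u != v -> v - u != 0. Proof. by move=> h; rewrite subr_eq0 eq_sym. Qed.

Lemma rec_alg x P W : q != 0 -> a != 0 -> b != 0 -> x != 0 -> P != 0 ->
  x != 1 -> x*q != 1 -> x*q*q != 1 -> x*x*q != 1 -> x*x*q*q != 1 -> x*x*q*q*q != 1 ->
  a != 1 -> b != 1 -> a*x != 1 -> b*x != 1 -> a*(x*q) != 1 -> b*(x*q) != 1 ->
  x != a -> x != b -> q*x != a -> q*x != b -> q*(x*q) != a -> q*(x*q) != b ->
  c0 q a b x*(P*(Cc + DD x/P + (1-a*b)*W)) +
  c1 q a b x*((P*rho x)*(Cc + DD (x*q)/(P*rho x) + (1-a*b)*(W + TT x/P))) +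
  c2 q a b x*((P*rho x*rho (x*q))*(Cc + DD (x*q*q)/(P*rho x*rho (x*q)) + (1-a*b)*(W + TT x/P + TT (x*q)/(P*rho x))))
  = - G0' x.
Proof.
move=> q0 a0 b0 x0 P0 h1 h2 h3 h4 h5 h6 h7 h8 h9 h10 h11 h12 h13 h14 h15 h16 h17 h18.
have e1 : -(x*q) != 0 by rewrite oppr_eq0 mulf_neq0.
have e2 : -(x*q*q) != 0 by rewrite oppr_eq0 !mulf_neq0.
have g1 := s2 h3. have g2 := s2 h2. have g3 := s5 h15. have g4 := s5 h16.
have g5 := s1 h1. have g6 := s1 h10. have g7 := s1 h9. have g8 := s1 h2.
have g9 := s1 h12. have g10 := s1 h11. have g11 := s5 h14. have g12 := s5 h13.
have g13 := s5 h18. have g14 := s5 h17. have g15 := s1 h3. have g16 := s1 h8.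
have g17 := s1 h7. have g18 := s1 h6. have g19 := s1 h5. have g20 := s2 h5. have g21 := s2 h4.
rewrite /c1 /c2 /c0 /beta /rho /DD /TT /Cc /G0'.
field.
by rewrite q0 x0 a0 b0 P0 e1 e2 g1 g2 g3 g4 g5 g6 g7 g8 g9 g10 g11 g12 g13 g14 g15 g16 g17 g18 g19 g20 g21.
Qed.
End B.
Arguments rho {F}. Arguments DD {F}. Arguments TT {F}. Arguments Cc {F}. Arguments G0' {F}.

Section R2.
Variable (F : fieldType) (q a b : F).
Hypotheses (q0 : q != 0) (a0 : a != 0) (b0 : b != 0) (a1 : a != 1) (b1 : b != 1).
Hypothesis qn1 : forall j, (0 < j)%N -> q ^+ j != 1.

Definition Pn n := (-1) ^+ n * q ^+ (n * n.+1)./2 * (1 - q ^+ n)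
    * (qpoch a q n * qpoch b q n) / (qpoch (q / a) q n * qpoch (q / b) q n)
    * (1 / (a * b)) ^+ n.
Definition Dn n := (qpoch a^-1 q n * qpoch b^-1 q n)
          / ((1 - q ^+ n) * (qpoch a q n * qpoch b q n))
          * (- (a * b)) ^+ n * q ^- (n * n.-1)./2.
Definition tj j := ((1 + q ^+ j) * (qpoch a^-1 q j * qpoch b^-1 q j))
            / (qpoch a q j.+1 * qpoch b q j.+1)
            * (- (a * b)) ^+ j * q ^- (j * j.-1)./2.
Definition Wn n := \sum_(1 <= j < n) tj j.
Definition RHS n := Pn n * (Cc a b + Dn n + (1 - a * b) * Wn n).

Lemma qa_fac {c y : F} : c != 0 -> 1 - q/c*y != 0 -> c - q*y != 0.
Proof.
move=> c0 h; have -> : c - q*y = c*(1-q/c*y) by field.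
exact: mulf_neq0.
Qed.

Lemma PnS n : (0 < n)%N -> qpoch (q/a) q n.+1 != 0 -> qpoch (q/b) q n.+1 != 0 ->
  Pn n.+1 = Pn n * rho q a b (q ^+ n).
Proof.
move=> n0 Ha Hb.
move: (Ha); rewrite qpochS mulf_eq0 negb_or => /andP [Qa fa].
move: (Hb); rewrite qpochS mulf_eq0 negb_or => /andP [Qb fb].
have x1 : 1 - q^+n != 0 by apply: s1; apply: qn1.
have x0 : q^+n != 0 by rewrite expf_neq0.
rewrite /Pn /rho halfS exprD !qpochS !exprSr.
field.
by rewrite a0 b0 (qa_fac b0 fb) (qa_fac a0 fa) x1 Qa Qb.
Qed.

Lemma qa_ne {c} j N : c != 0 -> (0 < j)%N -> (j <= N)%N -> qpoch (q/c) q N != 0 -> c - q^+j != 0.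
Proof.
case: j => // i c0 _ iN H.
by rewrite exprS; apply: (qa_fac c0); apply: (qpoch_fac iN H).
Qed.

Lemma inv_fac {c y : F} : c != 0 -> c - y != 0 -> 1 - c^-1 * y != 0.
Proof.
move=> c0 h; have -> : 1 - c^-1 * y = c^-1 * (c - y) by field.
by rewrite mulf_neq0 // invr_eq0.
Qed.

Lemma Eq_inv {c} n : c != 0 -> c - q^+n != 0 ->
  qpoch c^-1 q n = qpoch (q/c) q n * (1-c^-1) / (1 - c^-1 * q^+n).
Proof.
move=> c0 h; rewrite [q/c]mulrC qpoch_shift mulfK //; exact: inv_fac.
Qed.

Lemma PnD n : (0 < n)%N -> qpoch (q/a) q n != 0 -> qpoch (q/b) q n != 0 ->
  qpoch a q n != 0 -> qpoch b q n != 0 -> a - q^+n != 0 -> b - q^+n != 0 ->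
  Pn n * Dn n = DD a b (q ^+ n).
Proof.
move=> n0 Qa Qb A B xa xb.
have x1 : 1 - q^+n != 0 by apply: s1; apply: qn1.
have x0 : q^+n != 0 by rewrite expf_neq0.
have ia := inv_fac a0 xa. have ib := inv_fac b0 xb.
rewrite /Pn /Dn (Eq_inv _ a0 xa) (Eq_inv _ b0 xb) (halfP n n0) exprD [(- (a*b))^+n]exprNn expr_div_n expr1n.
have h0 : q ^+ (n * n.-1)./2 != 0 by rewrite expf_neq0.
have hab : (a*b)^+n != 0 by rewrite expf_neq0 // mulf_neq0.
rewrite -signr_odd; case: (odd n); rewrite /= ?expr0 ?expr1 /DD.
  all: field; by rewrite a0 b0 xa xb h0 A B x1 hab Qa Qb.
Qed.

Lemma PnT n : (0 < n)%N -> qpoch (q/a) q n != 0 -> qpoch (q/b) q n != 0 ->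
  qpoch a q n.+1 != 0 -> qpoch b q n.+1 != 0 -> a - q^+n != 0 -> b - q^+n != 0 ->
  Pn n * tj n = TT a b (q ^+ n).
Proof.
move=> n0 Qa Qb A' B' xa xb.
move: (A'); rewrite qpochS mulf_eq0 negb_or => /andP [A fa].
move: (B'); rewrite qpochS mulf_eq0 negb_or => /andP [B fb].
have x1 : 1 - q^+n != 0 by apply: s1; apply: qn1.
have x0 : q^+n != 0 by rewrite expf_neq0.
have ia := inv_fac a0 xa. have ib := inv_fac b0 xb.
have hab : (a*b)^+n != 0 by rewrite expf_neq0 // mulf_neq0.
rewrite /Pn /tj (Eq_inv _ a0 xa) (Eq_inv _ b0 xb) (halfP n n0) exprD [(- (a*b))^+n]exprNn expr_div_n expr1n.
rewrite [qpoch a q n.+1]qpochS [qpoch b q n.+1]qpochS.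
have h0 : q ^+ (n * n.-1)./2 != 0 by rewrite expf_neq0.
rewrite -signr_odd; case: (odd n); rewrite /= ?expr0 ?expr1 /TT.
  all: field; by rewrite ?a0 ?b0 ?fb ?fa ?xa ?xb ?h0 ?A ?B ?hab ?Qa ?Qb.
Qed.

Lemma neq1_of {z : F} : 1 - z != 0 -> z != 1.
Proof. by rewrite subr_eq0 eq_sym. Qed.
Lemma neq_of_sub {c y : F} : c - y != 0 -> y != c.
Proof. by rewrite subr_eq0 eq_sym. Qed.

Lemma DD_neq0 x : x != 0 -> 1 - a^-1 * x != 0 -> 1 - b^-1 * x != 0 -> DD a b x != 0.
Proof.
move=> x0 ha hb; by rewrite /DD !mulf_neq0 ?(s3 a1) ?(s3 b1) // invr_eq0 mulf_neq0.
Qed.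

Lemma recR m : (0 < m)%N -> qpoch (q/a) q m.+2 != 0 -> qpoch (q/b) q m.+2 != 0 ->
  qpoch a q m.+2 != 0 -> qpoch b q m.+2 != 0 ->
  c0 q a b (q^+m) * RHS m + c1 q a b (q^+m) * RHS m.+1 + c2 q a b (q^+m) * RHS m.+2
  = - G0' q a b (q^+m).
Proof.
move=> m0 Qa2 Qb2 A2 B2.
have Qa1 := qpoch_le (leqnSn m.+1) Qa2. have Qa0 := qpoch_le (leqnSn m) Qa1.
have Qb1 := qpoch_le (leqnSn m.+1) Qb2. have Qb0 := qpoch_le (leqnSn m) Qb1.
have A1 := qpoch_le (leqnSn m.+1) A2. have A0 := qpoch_le (leqnSn m) A1.
have B1 := qpoch_le (leqnSn m.+1) B2. have B0 := qpoch_le (leqnSn m) B1.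
have xa0 := qa_ne m m.+2 a0 m0 (leqW (leqnSn m)) Qa2.
have xa1 := qa_ne m.+1 m.+2 a0 (ltn0Sn m) (leqnSn m.+1) Qa2.
have xa2 := qa_ne m.+2 m.+2 a0 (ltn0Sn m.+1) (leqnn m.+2) Qa2.
have xb0 := qa_ne m m.+2 b0 m0 (leqW (leqnSn m)) Qb2.
have xb1 := qa_ne m.+1 m.+2 b0 (ltn0Sn m) (leqnSn m.+1) Qb2.
have xb2 := qa_ne m.+2 m.+2 b0 (ltn0Sn m.+1) (leqnn m.+2) Qb2.
have W1 : Wn m.+1 = Wn m + tj m by rewrite /Wn big_nat_recr.
have W2 : Wn m.+2 = Wn m + tj m + tj m.+1.
  by rewrite /Wn big_nat_recr // big_nat_recr.
have P1 : Pn m.+1 = Pn m * rho q a b (q^+m) := PnS m m0 Qa1 Qb1.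
have P2 : Pn m.+2 = Pn m * rho q a b (q^+m) * rho q a b (q^+m * q).
  by rewrite PnS // P1 exprSr.
have PD0 := PnD m m0 Qa0 Qb0 A0 B0 xa0 xb0.
have PD1 := PnD m.+1 (ltn0Sn m) Qa1 Qb1 A1 B1 xa1 xb1.
have PD2 := PnD m.+2 (ltn0Sn m.+1) Qa2 Qb2 A2 B2 xa2 xb2.
have Pnz : forall j, Pn j * Dn j = DD a b (q^+j) -> DD a b (q^+j) != 0 -> Pn j != 0.
  move=> j e h; apply/eqP => e'; move: h; by rewrite -e e' mul0r eqxx.
have P0 : Pn m != 0 by apply: (Pnz _ PD0); apply: DD_neq0; rewrite ?expf_neq0 ?inv_fac.
have P1nz : Pn m.+1 != 0 by apply: (Pnz _ PD1); apply: DD_neq0; rewrite ?expf_neq0 ?inv_fac.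
have P2nz : Pn m.+2 != 0 by apply: (Pnz _ PD2); apply: DD_neq0; rewrite ?expf_neq0 ?inv_fac.
have D0 : Dn m = DD a b (q^+m) / Pn m by rewrite -PD0 [Pn m * _]mulrC mulfK.
have D1 : Dn m.+1 = DD a b (q^+m * q) / (Pn m * rho q a b (q^+m)).
  by rewrite -P1 -exprSr -PD1 [Pn m.+1 * _]mulrC mulfK.
have D2 : Dn m.+2 = DD a b (q^+m * q * q) / (Pn m * rho q a b (q^+m) * rho q a b (q^+m * q)).
  by rewrite -P2 -!exprSr -PD2 [Pn m.+2 * _]mulrC mulfK.
have T0 : tj m = TT a b (q^+m) / Pn m.
  by rewrite -(PnT m m0 Qa0 Qb0 A1 B1 xa0 xb0) [Pn m * _]mulrC mulfK.
have T1 : tj m.+1 = TT a b (q^+m * q) / (Pn m * rho q a b (q^+m)).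
  by rewrite -P1 -exprSr -(PnT m.+1 (ltn0Sn m) Qa1 Qb1 A2 B2 xa1 xb1) [Pn m.+1 * _]mulrC mulfK.
rewrite /RHS W1 W2 P1 P2 D0 D1 D2 T0 T1.
have fa0 := qpoch_fac (ltnSn m) A1. have fa1 := qpoch_fac (ltnSn m.+1) A2.
have fb0 := qpoch_fac (ltnSn m) B1. have fb1 := qpoch_fac (ltnSn m.+1) B2.
apply: rec_alg => //.
- by rewrite expf_neq0.
- exact: qn1.
- by rewrite -exprSr qn1.
- by rewrite -!exprSr qn1.
- by rewrite -exprD -!exprSr qn1.
- by rewrite -exprD -!exprSr qn1.
- by rewrite -exprD -!exprSr qn1.
- exact: neq1_of.
- exact: neq1_of.
- by apply: neq1_of; rewrite -exprSr.
- by apply: neq1_of; rewrite -exprSr.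
- exact: neq_of_sub.
- exact: neq_of_sub.
- by apply: neq_of_sub; rewrite -exprS.
- by apply: neq_of_sub; rewrite -exprS.
- by apply: neq_of_sub; rewrite -exprSr -exprS.
- by apply: neq_of_sub; rewrite -exprSr -exprS.
Qed.

Lemma RHSsplit n : RHS n = Pn n * Cc a b + Pn n * Dn n + (1 - a*b) * (Pn n * Wn n).
Proof. by rewrite /RHS; ring. Qed.

Lemma Pn1 : Pn 1 = -q*(1-q)*((1-a)*(1-b))/((1-q/a)*(1-q/b))/(a*b).
Proof. by rewrite /Pn /= !qpochS !qpoch0 !expr0 !expr1 !mulr1 !mul1r mulN1r. Qed.

Lemma base1 : qpoch (q/a) q 1 != 0 -> qpoch (q/b) q 1 != 0 ->
  qpoch a q 1 != 0 -> qpoch b q 1 != 0 -> Sm q a b 1 = RHS 1.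
Proof.
move=> Qa Qb A B.
have xa := qa_ne 1 1 a0 isT isT Qa. have xb := qa_ne 1 1 b0 isT isT Qb.
rewrite RHSsplit (PnD 1 isT Qa Qb A B xa xb) /Wn big_geq // !mulr0 addr0 Pn1.
rewrite /Sm /Fm !big_ord_recr big_ord0 /= !qpochS !qpoch0 /DD /Cc !expr1 !expr0.
have q1 : 1 - q != 0 by apply: s1; rewrite -(expr1 q) qn1.
rewrite expr1 in xa xb.
field.
by rewrite b0 a0 xa xb (s1 a1) (s1 b1) q0 oner_neq0.
Qed.

Lemma base2 : qpoch (q/a) q 2 != 0 -> qpoch (q/b) q 2 != 0 ->
  qpoch a q 2 != 0 -> qpoch b q 2 != 0 -> Sm q a b 2 = RHS 2.
Proof.
move=> Qa2 Qb2 A2 B2.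
have Qa1 := qpoch_le (leqnSn 1) Qa2. have Qb1 := qpoch_le (leqnSn 1) Qb2.
have A1 := qpoch_le (leqnSn 1) A2. have B1 := qpoch_le (leqnSn 1) B2.
have xa1 := qa_ne 1 2 a0 isT isT Qa2. have xb1 := qa_ne 1 2 b0 isT isT Qb2.
have xa2 := qa_ne 2 2 a0 isT isT Qa2. have xb2 := qa_ne 2 2 b0 isT isT Qb2.
rewrite RHSsplit (PnD 2 isT Qa2 Qb2 A2 B2 xa2 xb2) /Wn big_nat1 (PnS 1 isT Qa2 Qb2).
have e : Pn 1 * rho q a b (q^+1) * tj 1 = rho q a b (q^+1) * TT a b (q^+1).
  by rewrite -(PnT 1 isT Qa1 Qb1 A2 B2 xa1 xb1); ring.
rewrite e Pn1.
rewrite /Sm /Fm !big_ord_recr big_ord0 /= !qpochS !qpoch0 /DD /Cc /TT /rho !expr1 !expr0.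
have q1 : 1 - q != 0 by apply: s1; rewrite -(expr1 q) qn1.
have q2 : 1 - q^+2 != 0 by apply: s1; rewrite qn1.
rewrite expr1 in xa1 xb1. rewrite expr2 in xa2 xb2.
have fa := qpoch_fac (ltnSn 1) A2. have fb := qpoch_fac (ltnSn 1) B2.
rewrite expr1 in fa fb.
field.
by rewrite b0 a0 fa fb xa1 xb1 xa2 xb2 q1 (s1 a1) (s1 b1) q0 oner_neq0.
Qed.

Lemma c2_nz m : (0 < m)%N -> a - q^+m.+2 != 0 -> b - q^+m.+2 != 0 -> c2 q a b (q^+m) != 0.
Proof.
move=> m0 ha hb.
have e : forall c, c != 0 -> c - q^+m.+2 != 0 -> 1 - q^+m*q*q/c != 0.
  move=> c c0' h; have -> : 1 - q^+m*q*q/c = (c - q^+m.+2)/c by rewrite !exprSr; field.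
  by rewrite mulf_neq0 ?invr_eq0.
rewrite /c2 /beta.
repeat (apply: mulf_neq0 || rewrite invr_eq0 || rewrite oppr_eq0).
all: try (apply: e => //).
all: try (apply: s1); try (apply: s3).
all: rewrite -?exprSr -?exprD -?exprSr ?invr_eq1 qn1 // addn_gt0 m0.
Qed.

Lemma main N : (0 < N)%N -> (forall k, (k <= N)%N -> qpoch (q/a) q k != 0) ->
  (forall k, (k <= N)%N -> qpoch (q/b) q k != 0) ->
  qpoch a q N != 0 -> qpoch b q N != 0 -> Sm q a b N = RHS N.
Proof.
move=> N0 Ha Hb A B.
have key : forall m, (m.+2 <= N)%N -> Sm q a b m.+1 = RHS m.+1 /\ Sm q a b m.+2 = RHS m.+2.
  elim=> [|m IH] hm.
    split; [apply: base1 | apply: base2].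
    - exact: Ha (ltnW hm).
    - exact: Hb (ltnW hm).
    - exact: qpoch_le (ltnW hm) A.
    - exact: qpoch_le (ltnW hm) B.
    - exact: Ha hm.
    - exact: Hb hm.
    - exact: qpoch_le hm A.
    - exact: qpoch_le hm B.
  have [e1 e2] := IH (ltnW hm); split => //.
  have m0 : (0 < m.+1)%N by [].
  have Ea : qpoch a^-1 q m.+4 != 0.
    rewrite qpochSl mulf_neq0 ?(s3 a1) //; rewrite [a^-1 * q]mulrC; exact: Ha.
  have Eb : qpoch b^-1 q m.+4 != 0.
    rewrite qpochSl mulf_neq0 ?(s3 b1) //; rewrite [b^-1 * q]mulrC; exact: Hb.
  have rS := @recS F q a b q0 a0 b0 a1 b1 qn1 m.+1 m0 Ea Eb.
  have rR := @recR m.+1 m0 (Ha _ hm) (Hb _ hm)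
     (qpoch_le hm A) (qpoch_le hm B).
  rewrite e1 e2 in rS.
  have c2nz : c2 q a b (q^+m.+1) != 0.
    apply: c2_nz => //.
    - exact: (qa_ne m.+3 N a0 isT hm (Ha N (leqnn N))).
    - exact: (qa_ne m.+3 N b0 isT hm (Hb N (leqnn N))).
  apply: (mulfI c2nz).
  apply: (@addrI _ (c0 q a b (q^+m.+1) * RHS m.+1 + c1 q a b (q^+m.+1) * RHS m.+2)).
  by rewrite rS rR /G0 /G0'.
have [N1|N2] : N = 1%N \/ (2 <= N)%N by case: N N0 {Ha Hb A B key} => [|[|p]] //; [left|right].
  subst N; apply: base1 => //; [exact: Ha | exact: Hb].
move: N2; case: N N0 Ha Hb A B key => [|[|p]] // _ Ha Hb A B key _.
exact: (key p (leqnn _)).2.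
Qed.
End R2.

Theorem theorem2p7 (R : rcfType) (q a b : R[i]) (n : nat) :
  0 < `|q| < 1 -> (0 < n)%N ->
  a != 0 -> b != 0 ->
  (forall k, (k <= n)%N -> qpoch (q / a) q k != 0) ->
  (forall k, (k <= n)%N -> qpoch (q / b) q k != 0) ->
  qpoch a q n != 0 -> qpoch b q n != 0 ->
  \sum_(k < n.+1) (qpoch (q ^- n) q k * qpoch (q ^+ n) q k * q ^+ k)
                    / (qpoch (q / a) q k * qpoch (q / b) q k)
  = (-1) ^+ n * q ^+ (n * n.+1)./2 * (1 - q ^+ n)
    * (qpoch a q n * qpoch b q n) / (qpoch (q / a) q n * qpoch (q / b) q n)
    * (1 / (a * b)) ^+ n
    * ( (1 - a * b) / ((1 - a) * (1 - b))
      + (qpoch a^-1 q n * qpoch b^-1 q n)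
          / ((1 - q ^+ n) * (qpoch a q n * qpoch b q n))
          * (- (a * b)) ^+ n * q ^- (n * n.-1)./2
      + (1 - a * b) * \sum_(1 <= j < n)
          ((1 + q ^+ j) * (qpoch a^-1 q j * qpoch b^-1 q j))
            / (qpoch a q j.+1 * qpoch b q j.+1)
            * (- (a * b)) ^+ j * q ^- (j * j.-1)./2 ).

Proof.
move=> /andP [q0' q1'] n0 a0 b0 Ha Hb A B.
have q0 : q != 0 by rewrite -normr_gt0.
have qn1 : forall j, (0 < j)%N -> q ^+ j != 1.
  move=> j j0; apply/eqP => e.
  have : `|q| ^+ j < 1 by rewrite exprn_ilt1 // -lt0n.
  by rewrite -normrX e normr1 ltxx.
have a1 : a != 1.
  have := qpoch_fac n0 A; by rewrite expr0 mulr1 subr_eq0 eq_sym.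
have b1 : b != 1.
  have := qpoch_fac n0 B; by rewrite expr0 mulr1 subr_eq0 eq_sym.
exact: (@main _ q a b q0 a0 b0 a1 b1 qn1 n n0 Ha Hb A B).
Qed.
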